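(* Let $D>0$, $\beta=1$, $-1<\nu<1$, $\alpha>0$, and let the inelastic curvature be isotropic: $\bar{\mathbf k}=(\bar k,\bar k,0)^\top$ with $\bar k>0$. Consider the minimization of $\mathcal E(\mathbf k)=\tfrac12\mathbf D(\mathbf k-\bar{\mathbf k})\cdot(\mathbf k-\bar{\mathbf k})$ over $\{\mathbf k\in\mathbb R^3:\det\mathbf k=0\}$. Then the set of local minimizers coincides with the set of global minimizers, and it is: (i) if $\alpha>1$: exactly the two points $\mathbf k=((1+\nu)\bar k,0,0)^\top$ and $\mathbf k=(0,(1+\nu)\bar k,0)^\top$, i.e. the cylindrical configurations $(1+\nu)\bar k\,\mathbf e(\varphi)\otimes\mathbf e(\varphi)$ with $\varphi\in\{0,\pi/2\}$; (ii) if $\alpha<1$: exactly the two points $\mathbf k=(c,c,2c)^\top$ and $\mathbf k=(c,c,-2c)^\top$ with $c=\dfrac{(1+\nu)\bar k}{1+\nu+\alpha-\alpha\nu}$, i.e. the cylindrical configurations $2c\,\mathbf e(\varphi)\otimes\mathbf e(\varphi)$ with $\varphi=\pm\pi/4$; (iii) if $\alpha=1$: the whole one-parameter family $\{(1+\nu)\bar k\,(\cos^2\varphi,\sin^2\varphi,2\sin\varphi\cos\varphi)^\top:\ \varphi\in[0,\pi)\}$, i.e. all cylindrical configurations $(1+\nu)\bar k\,\mathbf e(\varphi)\otimes\mathbf e(\varphi)$, which all have the same energy (neutral stability). Moreover, in the coordinates $\boldsymbol\kappa=\kappa_m(1,a\cos\theta,b\sin\theta)$ with $\kappa_m$ eliminated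 through its optimal value, the reduced energy $\tilde U(\theta)=\min_{\kappa_m}\tfrac12\|\boldsymbol\kappa-T\bar{\mathbf k}\|^2$ satisfies $\tilde U'(\theta)=\dfrac{\bar\kappa_m^2(b^2-a^2)\sin2\theta}{2(a^2\cos^2\theta+b^2\sin^2\theta+1)^2}$ with $\bar\kappa_m=\sqrt{1+\nu}\,\bar k$.
   Context: Curvature tensors are Voigt vectors $\mathbf k=(k_{11},k_{22},2k_{12})^\top$, $\det\mathbf k=k_{11}k_{22}-k_{12}^2$, $\mathbf e(\varphi)=(\cos\varphi,\sin\varphi)$. The bending stiffness matrix is $\mathbf D=D\begin{pmatrix}1&\nu&0\\ \nu&\beta&0\\ 0&0&\alpha\frac{1-\nu}{2}\end{pmatrix}$. The map $T$: $\kappa_m=\sqrt{1+\nu/\sqrt\beta}\,\frac{k_{11}+\sqrt\beta\,k_{22}}{2}$, $\kappa_d=\sqrt{1-\nu/\sqrt\beta}\,\frac{\sqrt\beta\,k_{22}-k_{11}}{2}$, $\kappa_t=\sqrt{(1-\nu)\alpha}\,k_{12}$; $a=\sqrt{\frac{\sqrt\beta-\nu}{\sqrt\beta+\nu}}$, $b=\sqrt{\alpha\frac{1-\nu}{\sqrt\beta+\nu}}$ (for $\beta=1$: $a=\sqrt{(1-\nu)/(1+\nu)}$, $b=\sqrt\alpha\,a$). *)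

(* Defs.v *)
From Stdlib Require Import Reals Lra.
Open Scope R_scope.

(* Voigt vectors k = (k11, k22, 2 k12) represented as triples. *)
Definition vec3 : Type := (R * R * R)%type.
Definition v1 (k : vec3) : R := fst (fst k).
Definition v2 (k : vec3) : R := snd (fst k).
Definition v3 (k : vec3) : R := snd k.
Definition mk3 (x y z : R) : vec3 := (x, y, z).

Definition vsub (k l : vec3) : vec3 := mk3 (v1 k - v1 l) (v2 k - v2 l) (v3 k - v3 l).
Definition vdot (k l : vec3) : R := v1 k * v1 l + v2 k * v2 l + v3 k * v3 l.
Definition vnorm (k : vec3) : R := sqrt (vdot k k).

(* det k = k11 k22 - k12^2, with k12 = (third Voigt component)/2. *)
Definition detk (k : vec3) : R := v1 k * v2 k - (v3 k / 2) ^ 2.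

Definition Dmul (D nu beta alpha : R) (k : vec3) : vec3 :=
  mk3 (D * (v1 k + nu * v2 k))
      (D * (nu * v1 k + beta * v2 k))
      (D * (alpha * (1 - nu) / 2 * v3 k)).

Definition energy (D nu beta alpha : R) (kbar k : vec3) : R :=
  / 2 * vdot (Dmul D nu beta alpha (vsub k kbar)) (vsub k kbar).

Definition global_min (E : vec3 -> R) (k : vec3) : Prop :=
  detk k = 0 /\ forall k', detk k' = 0 -> E k <= E k'.

Definition local_min (E : vec3 -> R) (k : vec3) : Prop :=
  detk k = 0 /\ exists eps, 0 < eps /\
    forall k', detk k' = 0 -> vnorm (vsub k' k) < eps -> E k <= E k'.

Definition Tmap (nu beta alpha : R) (k : vec3) : vec3 :=
  mk3 (sqrt (1 + nu / sqrt beta) * ((v1 k + sqrt beta * v2 k) / 2))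
      (sqrt (1 - nu / sqrt beta) * ((sqrt beta * v2 k - v1 k) / 2))
      (sqrt ((1 - nu) * alpha) * (v3 k / 2)).

Definition acoef (nu beta : R) : R := sqrt ((sqrt beta - nu) / (sqrt beta + nu)).
Definition bcoef (nu beta alpha : R) : R := sqrt (alpha * (1 - nu) / (sqrt beta + nu)).

Definition kappa_of (nu beta alpha km theta : R) : vec3 :=
  mk3 km (km * (acoef nu beta * cos theta)) (km * (bcoef nu beta alpha * sin theta)).

Definition Ufun (nu beta alpha : R) (kbar : vec3) (km theta : R) : R :=
  / 2 * vdot (vsub (kappa_of nu beta alpha km theta) (Tmap nu beta alpha kbar))
             (vsub (kappa_of nu beta alpha km theta) (Tmap nu beta alpha kbar)).

Definition is_min_value (g : R -> R) (m : R) : Prop :=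
  (exists x, g x = m) /\ forall x, m <= g x.

(* Main.v *)
Require Import Defs.
From Stdlib Require Import Reals Lra Psatz.
Open Scope R_scope.

Definition G (nu alpha kb x y z : R) : R :=
  (1+nu)*(x+y-2*kb)^2 + (1-nu)*((x-y)^2 + alpha*z^2).

Lemma energy_eq D nu alpha kb x y z :
  energy D nu 1 alpha (mk3 kb kb 0) (x, y, z) = D/4 * G nu alpha kb x y z.
Proof. unfold energy, Dmul, vdot, vsub, mk3, v1, v2, v3, G; simpl. field. Qed.

Lemma dist_lt x y z x' y' z' eps : 0 < eps ->
  (x'-x)^2 + (y'-y)^2 + (z'-z)^2 < eps^2 ->
  vnorm (vsub (x', y', z') (x, y, z)) < eps.
Proof.
  intros He H. unfold vnorm, vdot, vsub, mk3, v1, v2, v3; simpl.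
  rewrite <- (sqrt_pow2 eps) by lra. apply sqrt_lt_1_alt. split.
  - pose proof (Rle_0_sqr (x'-x)); pose proof (Rle_0_sqr (y'-y)); pose proof (Rle_0_sqr (z'-z)); unfold Rsqr in *; lra.
  - simpl in H. lra.
Qed.

Lemma local_to_G D nu alpha kb x y z : 0 < D ->
  local_min (energy D nu 1 alpha (mk3 kb kb 0)) (x, y, z) ->
  4*x*y = z^2 /\ exists eps, 0 < eps /\ forall x' y' z', 4*x'*y' = z'^2 ->
    (x'-x)^2 + (y'-y)^2 + (z'-z)^2 < eps^2 -> G nu alpha kb x y z <= G nu alpha kb x' y' z'.
Proof.
  intros HD [Hd [eps [He H]]]. unfold detk, v1, v2, v3 in Hd; simpl in Hd.
  split. nra. exists eps. split. exact He.
  intros x' y' z' Hc Hdd. specialize (H (x', y', z')).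
  rewrite !energy_eq in H.
  assert (D/4 * G nu alpha kb x y z <= D/4 * G nu alpha kb x' y' z').
  { apply H. unfold detk, v1, v2, v3; simpl. nra. apply dist_lt; auto. }
  apply Rmult_le_reg_l with (D/4). lra. exact H0.
Qed.

Lemma global_to_local E k : global_min E k -> local_min E k.
Proof. intros [Hd H]. split; auto. exists 1. split. lra. intros; auto. Qed.

Lemma le_div t a b : 0 < b -> t <= a/b -> t*b <= a.
Proof. intros Hb H. replace a with (a/b*b) by (field; lra). apply Rmult_le_compat_r; lra. Qed.

Lemma scale_step g1 g2 S eps : g1 <> 0 -> 0 <= g2 -> 0 <= S -> 0 < eps ->
  exists h, h^2 * S < eps^2 /\ 2*h*g1 + h^2*g2 < 0.
Proof.
  intros Hg1 Hg2 HS He.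
  assert (Hab: 0 < Rabs g1) by (apply Rabs_pos_lt; auto).
  set (tau := Rmin (Rabs g1 / (g2+1)) (eps/(S+1))).
  assert (Ht1: tau <= Rabs g1/(g2+1)) by apply Rmin_l.
  assert (Ht2: tau <= eps/(S+1)) by apply Rmin_r.
  assert (Ht0: 0 < tau) by (apply Rmin_glb_lt; apply Rdiv_lt_0_compat; lra).
  assert (Ht1': tau*(g2+1) <= Rabs g1) by (apply le_div; lra).
  assert (Ht2': tau*(S+1) <= eps) by (apply le_div; lra).
  assert (A1: tau^2*S < eps^2).
  { assert (tau^2*S < (tau*(S+1))^2) by nra.
    assert ((tau*(S+1))^2 <= eps^2) by (apply pow_incr; nra). lra. }
  assert (A2: tau^2*g2 < tau * Rabs g1) by nra.
  destruct (Rle_dec 0 g1) as [Hp|Hn].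
  - rewrite Rabs_right in A2 by lra. exists (-tau). split. nra. nra.
  - rewrite Rabs_left in A2 by lra. exists tau. split. nra. nra.
Qed.

Lemma move P Q eps : Q <> 0 -> 0 < eps ->
  exists P' Q' e, 0 < e /\ P'^2 = P^2 + e /\ Q'^2 = Q^2 - e /\
    (P'-P)^2 + (Q'-Q)^2 < eps^2.
Proof.
  intros HQ He.
  assert (HQ2: 0 < Q^2) by (pose proof (Rsqr_pos_lt Q HQ); unfold Rsqr in *; simpl; lra).
  set (t := Rmin (1/2) (eps^2/(4*(Q^2+1)))).
  assert (Ht1: t <= 1/2) by apply Rmin_l.
  assert (Ht2: t <= eps^2/(4*(Q^2+1))) by apply Rmin_r.
  assert (Ht0: 0 < t) by (apply Rmin_glb_lt; [lra| apply Rdiv_lt_0_compat; nra]).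
  assert (Ht2': t*(4*(Q^2+1)) <= eps^2) by (apply le_div; nra).
  set (e := Q^2*(2*t - t^2)).
  assert (He0: 0 < e) by (unfold e; nra).
  set (s := sqrt (P^2 + e)).
  assert (Hs0: 0 <= s) by apply sqrt_pos.
  assert (Hs2: s*s = P^2+e) by (apply sqrt_sqrt; nra).
  assert (Hs3: s^2 = P^2+e) by (simpl; lra).
  assert (HB0: e + t^2*Q^2 = 2*t*Q^2) by (unfold e; ring).
  assert (HB1: 2*t*Q^2 < t*(4*(Q^2+1))) by nra.
  assert (HB: e + t^2*Q^2 < eps^2) by lra.
  destruct (Rle_dec 0 P) as [Hp|Hn].
  - exists s, ((1-t)*Q), e. split. lra. split. lra. split. unfold e; ring.
    assert (P <= s) by nra.
    assert ((s-P)^2 <= e) by nra.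
    assert (((1-t)*Q - Q)^2 = t^2*Q^2) by ring.
    lra.
  - exists (-s), ((1-t)*Q), e. split. lra. split. rewrite <- Hs3; ring. split. unfold e; ring.
    assert (-P <= s) by nra.
    assert ((-s-P)^2 <= e) by nra.
    assert (((1-t)*Q - Q)^2 = t^2*Q^2) by ring.
    lra.
Qed.

Section Loc.
Variables (nu alpha kb x y z eps : R).
Hypotheses (hnu1 : -1 < nu) (hnu2 : nu < 1) (halpha : 0 < alpha) (hkb : 0 < kb)
  (Hc : 4*x*y = z^2) (He : 0 < eps)
  (Hloc : forall x' y' z', 4*x'*y' = z'^2 ->
    (x'-x)^2 + (y'-y)^2 + (z'-z)^2 < eps^2 -> G nu alpha kb x y z <= G nu alpha kb x' y' z').

Lemma loc_nonzero : ~ (x = 0 /\ y = 0 /\ z = 0).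
Proof.
  intros [H1 [H2 H3]]. subst x y z.
  set (t := Rmin (eps/2) ((1+nu)*kb)).
  assert (Ht1: t <= eps/2) by apply Rmin_l.
  assert (Ht2: t <= (1+nu)*kb) by apply Rmin_r.
  assert (Ht0: 0 < t) by (apply Rmin_glb_lt; nra).
  assert (HH := Hloc t 0 0 ltac:(ring) ltac:(nra)).
  unfold G in HH. nra.
Qed.

Lemma loc_g1 : (1+nu)*(x+y-2*kb)*(x+y) + (1-nu)*((x-y)^2+alpha*z^2) = 0.
Proof.
  destruct (Req_dec ((1+nu)*(x+y-2*kb)*(x+y) + (1-nu)*((x-y)^2+alpha*z^2)) 0) as [|Hn]; auto.
  exfalso.
  destruct (scale_step _ ((1+nu)*(x+y)^2 + (1-nu)*((x-y)^2+alpha*z^2)) (x^2+y^2+z^2) eps Hn)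
    as [h [Hh1 Hh2]]; [| pose proof (pow2_ge_0 x); pose proof (pow2_ge_0 y); pose proof (pow2_ge_0 z); lra |auto|].
  { assert (0 <= (x+y)^2) by apply pow2_ge_0. assert (0 <= (x-y)^2 + alpha*z^2) by (pose proof (pow2_ge_0 (x-y)); pose proof (pow2_ge_0 z); nra).
    apply Rplus_le_le_0_compat; apply Rmult_le_pos; lra. }
  assert (Hc2: 4*((1+h)*x)*((1+h)*y) = ((1+h)*z)^2).
  { replace (((1+h)*z)^2) with ((1+h)^2*z^2) by ring. rewrite <- Hc; ring. }
  assert (HH := Hloc ((1+h)*x) ((1+h)*y) ((1+h)*z) Hc2).
  assert (Hd : ((1+h)*x - x)^2 + ((1+h)*y - y)^2 + ((1+h)*z - z)^2 = h^2*(x^2+y^2+z^2)) by ring.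
  rewrite Hd in HH. specialize (HH Hh1).
  assert (Heq : G nu alpha kb ((1+h)*x) ((1+h)*y) ((1+h)*z) - G nu alpha kb x y z =
     2*h*((1+nu)*(x+y-2*kb)*(x+y) + (1-nu)*((x-y)^2+alpha*z^2)) +
     h^2*((1+nu)*(x+y)^2 + (1-nu)*((x-y)^2+alpha*z^2))) by (unfold G; ring).
  lra.
Qed.

Lemma loc_gt1 : 1 < alpha -> z = 0.
Proof.
  intros Ha. destruct (Req_dec z 0) as [|Hz]; auto. exfalso.
  destruct (move (x-y) z eps Hz He) as [P' [Q' [e [He0 [HP [HQ Hd]]]]]].
  assert (HH := Hloc ((x+y+P')/2) ((x+y-P')/2) Q').
  assert (Hc' : 4*((x+y+P')/2)*((x+y-P')/2) = Q'^2).
  { assert (E1: 4*((x+y+P')/2)*((x+y-P')/2) = (x+y)^2 - P'^2) by field.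
    assert (E2: (x+y)^2 - (x-y)^2 = 4*x*y) by ring. lra. }
  specialize (HH Hc').
  assert (Hd' : ((x+y+P')/2 - x)^2 + ((x+y-P')/2 - y)^2 + (Q' - z)^2 = (P'-(x-y))^2/2 + (Q'-z)^2) by (field).
  rewrite Hd' in HH.
  assert (Hd2: 0 <= (P'-(x-y))^2) by apply pow2_ge_0.
  specialize (HH ltac:(lra)).
  unfold G in HH.
  replace ((x + y + P') / 2 + (x + y - P') / 2) with (x+y) in HH by field.
  replace ((x + y + P') / 2 - (x + y - P') / 2) with P' in HH by field.
  rewrite HP, HQ in HH. clear Hz Hloc. assert (0 < (1-nu)*(alpha-1)) by nra. nra.
Qed.

Lemma loc_lt1 : alpha < 1 -> x - y = 0.
Proof.
  intros Ha. destruct (Req_dec (x-y) 0) as [|Hz]; auto. exfalso.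
  destruct (move z (x-y) eps Hz He) as [P' [Q' [e [He0 [HP [HQ Hd]]]]]].
  assert (HH := Hloc ((x+y+Q')/2) ((x+y-Q')/2) P').
  assert (Hc' : 4*((x+y+Q')/2)*((x+y-Q')/2) = P'^2).
  { assert (E1: 4*((x+y+Q')/2)*((x+y-Q')/2) = (x+y)^2 - Q'^2) by field.
    assert (E2: (x+y)^2 - (x-y)^2 = 4*x*y) by ring. lra. }
  specialize (HH Hc').
  assert (Hd' : ((x+y+Q')/2 - x)^2 + ((x+y-Q')/2 - y)^2 + (P' - z)^2 = (Q'-(x-y))^2/2 + (P'-z)^2) by (field).
  rewrite Hd' in HH.
  assert (Hd2: 0 <= (Q'-(x-y))^2) by apply pow2_ge_0.
  specialize (HH ltac:(lra)).
  unfold G in HH.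
  replace ((x + y + Q') / 2 + (x + y - Q') / 2) with (x+y) in HH by field.
  replace ((x + y + Q') / 2 - (x + y - Q') / 2) with Q' in HH by field.
  rewrite HP, HQ in HH. clear Hz Hloc. assert (0 < (1-nu)*(1-alpha)) by nra. nra.
Qed.

End Loc.

Lemma unit_angle u v : u^2 + v^2 = 1 ->
  exists th, 0 <= th < 2*PI /\ cos th = u /\ sin th = v.
Proof.
  intros H.
  assert (Hu: -1 <= u <= 1) by (pose proof (pow2_ge_0 v); split; nra).
  assert (Hs: sqrt (1 - u²) = Rabs v).
  { replace (1 - u²) with (v²) by (unfold Rsqr; simpl in H; lra). apply sqrt_Rsqr_abs. }
  pose proof PI_RGT_0.
  destruct (Rle_dec 0 v) as [Hv|Hv].
  - exists (acos u). pose proof (acos_bound u). split. lra. split.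
    apply cos_acos; auto. rewrite sin_acos by auto. rewrite Hs. apply Rabs_right; lra.
  - assert (Hu2: -1 < u < 1).
    { assert (0 < v^2) by nra. split; nra. }
    pose proof (acos_bound_lt u Hu2).
    exists (2*PI - acos u). split. lra. split.
    + rewrite cos_minus, cos_2PI, sin_2PI, cos_acos by auto. ring.
    + rewrite sin_minus, cos_2PI, sin_2PI, sin_acos by auto. rewrite Hs, Rabs_left by lra. ring.
Qed.

Lemma angle_lemma Rr x y z : 0 < Rr -> x + y = Rr -> 4*x*y = z^2 ->
  exists phi, 0 <= phi < PI /\
    (x, y, z) = mk3 (Rr * (cos phi)^2) (Rr * (sin phi)^2) (Rr * (2 * sin phi * cos phi)).
Proof.
  intros HR Hr Hc.
  destruct (unit_angle ((x-y)/Rr) (z/Rr)) as [th [Hth [Hc1 Hs1]]].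
  { replace (((x-y)/Rr)^2 + (z/Rr)^2) with (((x-y)^2 + z^2)/Rr^2) by (field; lra).
    replace ((x-y)^2 + z^2) with (Rr^2) by (rewrite <- Hc, <- Hr; ring).
    field. lra. }
  exists (th/2). split. lra.
  replace th with (2*(th/2)) in Hc1, Hs1 by field.
  rewrite cos_2a_cos in Hc1. rewrite sin_2a in Hs1.
  pose proof (sin2_cos2 (th/2)) as H1. unfold Rsqr in *.
  set (c := cos (th/2)) in *. set (s := sin (th/2)) in *.
  assert (Hq: x - y = Rr*(2*c*c-1)) by (rewrite Hc1; field; lra).
  assert (Hz: z = Rr*(2*s*c)) by (rewrite Hs1; field; lra).
  assert (H2: Rr*(s*s+c*c) = Rr) by (rewrite H1; ring).
  unfold mk3. f_equal; [f_equal|].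
  - simpl. lra.
  - simpl. lra.
  - exact Hz.
Qed.

Definition Vge1 nu kb := 2*(1+nu)*(1-nu)*kb^2.
Definition Vle1 nu alpha kb := 4*kb^2*(1+nu)*((1-nu)*alpha)/((1+nu)+(1-nu)*alpha).

Lemma lb_ge1 nu alpha kb x y z : -1 < nu -> nu < 1 -> 1 <= alpha -> 4*x*y = z^2 ->
  Vge1 nu kb <= G nu alpha kb x y z.
Proof.
  intros h1 h2 ha Hc. unfold Vge1, G.
  assert (E1: (x+y)^2 = (x-y)^2 + z^2) by (rewrite <- Hc; ring).
  assert (E2: z^2 <= alpha*z^2) by (pose proof (pow2_ge_0 z); nra).
  assert (E3: (1-nu)*(x+y)^2 <= (1-nu)*((x-y)^2 + alpha*z^2)) by (apply Rmult_le_compat_l; lra).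
  assert (E4: 0 <= 2*(x+y-(1+nu)*kb)^2) by (pose proof (pow2_ge_0 (x+y-(1+nu)*kb)); lra).
  assert (E5: (1+nu)*(x+y-2*kb)^2 + (1-nu)*(x+y)^2 - 2*(1+nu)*(1-nu)*kb^2 = 2*(x+y-(1+nu)*kb)^2) by ring.
  lra.
Qed.

Lemma lb_le1 nu alpha kb x y z : -1 < nu -> nu < 1 -> 0 < alpha -> alpha <= 1 -> 4*x*y = z^2 ->
  Vle1 nu alpha kb <= G nu alpha kb x y z.
Proof.
  intros h1 h2 ha0 ha Hc. unfold Vle1, G.
  assert (E1: (x+y)^2 = (x-y)^2 + z^2) by (rewrite <- Hc; ring).
  assert (E2: alpha*(x-y)^2 <= (x-y)^2) by (pose proof (pow2_ge_0 (x-y)); nra).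
  set (A := 1+nu). set (B := (1-nu)*alpha).
  assert (HA: 0 < A) by (unfold A; lra). assert (HB: 0 < B) by (unfold B; nra).
  assert (E3: B*(x+y)^2 <= (1-nu)*((x-y)^2 + alpha*z^2)).
  { unfold B. rewrite E1. assert (0 < 1 - nu) by lra.
    assert ((1-nu)*(alpha*(x-y)^2) <= (1-nu)*((x-y)^2)) by (apply Rmult_le_compat_l; lra). nra. }
  assert (E4: 4*kb^2*A*B/(A+B) <= A*(x+y-2*kb)^2 + B*(x+y)^2).
  { apply (Rmult_le_reg_l (A+B)). lra.
    replace ((A+B)*(4*kb^2*A*B/(A+B))) with (4*kb^2*A*B) by (field; lra).
    assert (((A+B)*(x+y) - 2*kb*A)^2 >= 0) by (apply Rle_ge, pow2_ge_0).
    assert ((A+B)*(A*(x+y-2*kb)^2 + B*(x+y)^2) - 4*kb^2*A*B = ((A+B)*(x+y) - 2*kb*A)^2) by ring.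
    lra. }
  unfold A, B in *. lra.
Qed.

Lemma G_global D nu alpha kb x y z : 0 < D -> 4*x*y = z^2 ->
  (forall x' y' z', 4*x'*y' = z'^2 -> G nu alpha kb x y z <= G nu alpha kb x' y' z') ->
  global_min (energy D nu 1 alpha (mk3 kb kb 0)) (x, y, z).
Proof.
  intros HD Hc H. split.
  - unfold detk, v1, v2, v3; simpl. lra.
  - intros [[x' y'] z'] Hd. unfold detk, v1, v2, v3 in Hd; simpl in Hd.
    rewrite !energy_eq. apply Rmult_le_compat_l. lra. apply H. lra.
Qed.

Section Char.
Variables (D nu alpha kb : R).
Hypotheses (hD : 0 < D) (hnu1 : -1 < nu) (hnu2 : nu < 1) (halpha : 0 < alpha) (hkb : 0 < kb).
Let E := energy D nu 1 alpha (mk3 kb kb 0).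

Lemma char_gt1 x y z : 1 < alpha -> local_min E (x,y,z) ->
  (x,y,z) = mk3 ((1+nu)*kb) 0 0 \/ (x,y,z) = mk3 0 ((1+nu)*kb) 0.
Proof.
  intros Ha Hl. destruct (local_to_G D nu alpha kb x y z hD Hl) as [Hc [eps [He Hloc]]].
  assert (Hnz : ~ (x=0/\y=0/\z=0)) by (eapply (loc_nonzero nu alpha kb x y z eps); eassumption).
  assert (Hg : (1+nu)*(x+y-2*kb)*(x+y) + (1-nu)*((x-y)^2+alpha*z^2) = 0) by (eapply (loc_g1 nu alpha kb x y z eps); eassumption).
  assert (Hz : z = 0) by (eapply (loc_gt1 nu alpha kb x y z eps); eassumption).
  subst z. clear Hloc.
  assert (Hxy: x*y = 0) by lra.
  destruct (Rmult_integral _ _ Hxy) as [Hx|Hy].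
  - subst x. assert (Hy: y*(y-(1+nu)*kb) = 0) by lra.
    destruct (Rmult_integral _ _ Hy) as [Hy0|Hy1].
    + exfalso. apply Hnz. auto.
    + right. unfold mk3. repeat f_equal. lra.
  - subst y. assert (Hx: x*(x-(1+nu)*kb) = 0) by lra.
    destruct (Rmult_integral _ _ Hx) as [Hx0|Hx1].
    + exfalso. apply Hnz. auto.
    + left. unfold mk3. repeat f_equal. lra.
Qed.

Lemma char_lt1 x y z : alpha < 1 -> local_min E (x,y,z) ->
  let c := (1 + nu) * kb / (1 + nu + alpha - alpha * nu) in
  (x,y,z) = mk3 c c (2 * c) \/ (x,y,z) = mk3 c c (- (2 * c)).
Proof.
  intros Ha Hl c. destruct (local_to_G D nu alpha kb x y z hD Hl) as [Hc [eps [He Hloc]]].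
  assert (Hnz : ~ (x=0/\y=0/\z=0)) by (eapply (loc_nonzero nu alpha kb x y z eps); eassumption).
  assert (Hg : (1+nu)*(x+y-2*kb)*(x+y) + (1-nu)*((x-y)^2+alpha*z^2) = 0) by (eapply (loc_g1 nu alpha kb x y z eps); eassumption).
  assert (Hq : x - y = 0) by (eapply (loc_lt1 nu alpha kb x y z eps); eassumption).
  clear Hloc. assert (y = x) by lra. subst y.
  assert (Hden: 0 < 1 + nu + alpha - alpha*nu) by (assert (0 < alpha*(1-nu)) by (apply Rmult_lt_0_compat; lra); lra).
  assert (Haz: (1-nu)*(alpha*z^2) = (1-nu)*(alpha*(4*x*x))) by (rewrite <- Hc; ring).
  assert (Hx: x*((1+nu+alpha-alpha*nu)*x - (1+nu)*kb) = 0) by lra.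
  destruct (Rmult_integral _ _ Hx) as [Hx0|Hx1].
  - exfalso. apply Hnz. subst x. split; auto. split; auto. nra.
  - assert (Hxc: x = c) by (unfold c; apply (Rmult_eq_reg_l (1 + nu + alpha - alpha*nu)); [field_simplify; lra| lra]).
    subst x. assert (Hz: (z - 2*c)*(z + 2*c) = 0) by lra.
    destruct (Rmult_integral _ _ Hz) as [Hz1|Hz2].
    + left. unfold mk3. repeat f_equal. lra.
    + right. unfold mk3. repeat f_equal. lra.
Qed.

Lemma char_eq1 x y z : alpha = 1 -> local_min E (x,y,z) ->
  exists phi, 0 <= phi < PI /\
    (x, y, z) = mk3 ((1+nu)*kb * (cos phi)^2) ((1+nu)*kb * (sin phi)^2) ((1+nu)*kb * (2 * sin phi * cos phi)).
Proof.
  intros Ha Hl. destruct (local_to_G D nu alpha kb x y z hD Hl) as [Hc [eps [He Hloc]]].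
  assert (Hnz : ~ (x=0/\y=0/\z=0)) by (eapply (loc_nonzero nu alpha kb x y z eps); eassumption).
  assert (Hg : (1+nu)*(x+y-2*kb)*(x+y) + (1-nu)*((x-y)^2+alpha*z^2) = 0) by (eapply (loc_g1 nu alpha kb x y z eps); eassumption).
  clear Hloc. subst alpha.
  assert (E1: (x+y)^2 = (x-y)^2 + z^2) by (rewrite <- Hc; ring).
  assert (E2: (1-nu)*((x-y)^2+1*z^2) = (1-nu)*(x+y)^2) by (rewrite E1; ring).
  assert (Hr: (x+y)*((x+y) - (1+nu)*kb) = 0) by lra.
  destruct (Rmult_integral _ _ Hr) as [Hr0|Hr1].
  - exfalso. apply Hnz. rewrite Hr0 in E1.
    pose proof (pow2_ge_0 (x-y)). pose proof (pow2_ge_0 z).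
    assert (z^2 = 0) by lra. assert ((x-y)^2 = 0) by lra.
    assert (z = 0) by (destruct (Req_dec z 0); auto; exfalso; apply (pow_nonzero z 2); auto). 
    assert (x - y = 0) by (destruct (Req_dec (x-y) 0); auto; exfalso; apply (pow_nonzero (x-y) 2); auto).
    lra.
  - apply angle_lemma; try lra. nra.
Qed.
End Char.

Section Glob.
Variables (D nu alpha kb : R).
Hypotheses (hD : 0 < D) (hnu1 : -1 < nu) (hnu2 : nu < 1) (halpha : 0 < alpha) (hkb : 0 < kb).

Lemma glob_gt1 x y : 1 <= alpha -> (x = (1+nu)*kb /\ y = 0 \/ x = 0 /\ y = (1+nu)*kb) ->
  global_min (energy D nu 1 alpha (mk3 kb kb 0)) (x, y, 0).
Proof.
  intros Ha Hxy. apply G_global; auto.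
  - destruct Hxy as [[-> ->]|[-> ->]]; ring.
  - intros x' y' z' Hc'. apply Rle_trans with (Vge1 nu kb).
    + unfold G, Vge1. destruct Hxy as [[-> ->]|[-> ->]]; right; ring.
    + apply lb_ge1; auto.
Qed.

Lemma glob_lt1 w : alpha <= 1 ->
  let c := (1 + nu) * kb / (1 + nu + alpha - alpha * nu) in
  (w = 2*c \/ w = -(2*c)) ->
  global_min (energy D nu 1 alpha (mk3 kb kb 0)) (c, c, w).
Proof.
  intros Ha c Hw.
  assert (Hden: 0 < 1 + nu + alpha - alpha*nu) by (assert (0 < alpha*(1-nu)) by (apply Rmult_lt_0_compat; lra); lra).
  assert (Hw2: w^2 = 4*c^2) by (destruct Hw as [-> | ->]; ring).
  apply G_global; auto.
  - rewrite Hw2. ring.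
  - intros x' y' z' Hc'. apply Rle_trans with (Vle1 nu alpha kb).
    + unfold G, Vle1. rewrite Hw2. right. unfold c. field. lra.
    + apply lb_le1; auto.
Qed.

Lemma glob_eq1 phi : alpha = 1 ->
  global_min (energy D nu 1 alpha (mk3 kb kb 0))
    ((1+nu)*kb * (cos phi)^2, (1+nu)*kb * (sin phi)^2, (1+nu)*kb * (2 * sin phi * cos phi)).
Proof.
  intros Ha. pose proof (sin2_cos2 phi) as H1. unfold Rsqr in H1.
  apply G_global; auto.
  - ring.
  - intros x' y' z' Hc'. apply Rle_trans with (Vge1 nu kb).
    + unfold G, Vge1. subst alpha. right.
      set (c := cos phi) in *. set (s := sin phi) in *.
      replace s with (s) by auto.
      assert (Hs: s*s = 1 - c*c) by lra.
      assert (E1: (1+nu)*kb*c^2 + (1+nu)*kb*s^2 - 2*kb = (1+nu)*kb - 2*kb) by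
        (replace (s^2) with (1 - c*c) by (simpl; lra); ring).
      rewrite E1.
      assert (E2: ((1+nu)*kb*c^2 - (1+nu)*kb*s^2)^2 + 1*((1+nu)*kb*(2*s*c))^2 = ((1+nu)*kb)^2*(c*c+s*s)^2).
      { ring. }
      rewrite E2. replace (c*c+s*s) with 1 by lra. ring.
    + apply lb_ge1; auto; lra.
Qed.
End Glob.
From Coquelicot Require Import Coquelicot.
From Stdlib Require Import FunctionalExtensionality.

Lemma Ufun_eq nu alpha kb km th :
  Ufun nu 1 alpha (mk3 kb kb 0) km th =
  /2*((km - sqrt(1+nu)*kb)^2 + km^2 * ((acoef nu 1 * cos th)^2 + (bcoef nu 1 alpha * sin th)^2)).
Proof.
  unfold Ufun, vdot, vsub, kappa_of, Tmap, mk3, v1, v2, v3; simpl. rewrite sqrt_1.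
  unfold Rdiv. rewrite Rinv_1, !Rmult_1_r. field.
Qed.

Lemma Umin K P km : 0 <= P -> K^2*P/(2*(1+P)) <= /2*((km - K)^2 + km^2*P).
Proof.
  intros HP.
  assert (H: /2*((km - K)^2 + km^2*P) - K^2*P/(2*(1+P)) = (1+P)/2 * (km - K/(1+P))^2) by (field; lra).
  pose proof (pow2_ge_0 (km - K/(1+P))).
  assert (0 <= (1+P)/2 * (km - K/(1+P))^2) by (apply Rmult_le_pos; lra). lra.
Qed.

Lemma Uat K P : 0 <= P -> /2*((K/(1+P) - K)^2 + (K/(1+P))^2*P) = K^2*P/(2*(1+P)).
Proof. intros. field. lra. Qed.

Lemma deriv_F K a b th :
  derivable_pt_lim (fun t => K^2 * ((a*cos t)^2 + (b*sin t)^2) / (2*(1 + ((a*cos t)^2 + (b*sin t)^2)))) th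
   (K ^ 2 * (b ^ 2 - a ^ 2) * sin (2 * th) / (2 * (a ^ 2 * (cos th) ^ 2 + b ^ 2 * (sin th) ^ 2 + 1) ^ 2)).
Proof.
  apply is_derive_Reals.
  assert (HP: 0 < 1 + ((a*cos th)^2 + (b*sin th)^2)) by (pose proof (pow2_ge_0 (a*cos th)); pose proof (pow2_ge_0 (b*sin th)); lra).
  auto_derive.
  - lra.
  - rewrite sin_2a. field. lra.
Qed.

Theorem mainTheorem4 (D nu alpha kb : R)
  (hD : 0 < D) (hnu1 : -1 < nu) (hnu2 : nu < 1) (halpha : 0 < alpha) (hkb : 0 < kb) :
  let beta := 1 in
  let kbar := mk3 kb kb 0 in
  let E := energy D nu beta alpha kbar in
  (forall k, local_min E k <-> global_min E k) /\
  (1 < alpha -> forall k, global_min E k <->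
      (k = mk3 ((1 + nu) * kb) 0 0 \/ k = mk3 0 ((1 + nu) * kb) 0)) /\
  (alpha < 1 -> forall k, global_min E k <->
      (let c := (1 + nu) * kb / (1 + nu + alpha - alpha * nu) in
       k = mk3 c c (2 * c) \/ k = mk3 c c (- (2 * c)))) /\
  (alpha = 1 -> forall k, global_min E k <->
      (exists phi, 0 <= phi < PI /\
         k = mk3 ((1 + nu) * kb * (cos phi) ^ 2) ((1 + nu) * kb * (sin phi) ^ 2)
                 ((1 + nu) * kb * (2 * sin phi * cos phi)))) /\
  (* reduced energy: Ut theta = min over kappa_m of 1/2 ||kappa - T kbar||^2 *)
  (exists Ut : R -> R, forall theta,
      is_min_value (fun km => Ufun nu beta alpha kbar km theta) (Ut theta)) /\
  (forall Ut : R -> R,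
      (forall theta, is_min_value (fun km => Ufun nu beta alpha kbar km theta) (Ut theta)) ->
      let a := acoef nu beta in
      let b := bcoef nu beta alpha in
      let kmbar := sqrt (1 + nu) * kb in
      forall theta, derivable_pt_lim Ut theta
        (kmbar ^ 2 * (b ^ 2 - a ^ 2) * sin (2 * theta)
         / (2 * (a ^ 2 * (cos theta) ^ 2 + b ^ 2 * (sin theta) ^ 2 + 1) ^ 2))).
Proof.
  cbv zeta.
  assert (Hlg: forall k, local_min (energy D nu 1 alpha (mk3 kb kb 0)) k ->
                    global_min (energy D nu 1 alpha (mk3 kb kb 0)) k).
  { intros [[x y] z] Hl. destruct (Rtotal_order alpha 1) as [Ha|[Ha|Ha]].
    - destruct (char_lt1 D nu alpha kb hD hnu1 hnu2 halpha hkb x y z Ha Hl) as [H|H];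
        rewrite H; unfold mk3; apply glob_lt1; auto; lra.
    - destruct (char_eq1 D nu alpha kb hD hnu1 hnu2 halpha hkb x y z Ha Hl) as [phi [_ H]].
      rewrite H; unfold mk3; apply glob_eq1; auto.
    - destruct (char_gt1 D nu alpha kb hD hnu1 hnu2 halpha hkb x y z Ha Hl) as [H|H];
        rewrite H; unfold mk3; apply glob_gt1; auto; lra. }
  split; [|split; [|split; [|split; [|split]]]].
  - intros k; split; [apply Hlg | apply global_to_local].
  - intros Ha k; split.
    + intro Hg. destruct k as [[x y] z].
      apply (char_gt1 D nu alpha kb hD hnu1 hnu2 halpha hkb x y z Ha). apply global_to_local; auto.
    + intros [H|H]; rewrite H; unfold mk3; apply glob_gt1; auto; lra.
  - intros Ha k; split.
    + intro Hg. destruct k as [[x y] z].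
      apply (char_lt1 D nu alpha kb hD hnu1 hnu2 halpha hkb x y z Ha). apply global_to_local; auto.
    + intros [H|H]; rewrite H; unfold mk3; apply glob_lt1; auto; lra.
  - intros Ha k; split.
    + intro Hg. destruct k as [[x y] z].
      apply (char_eq1 D nu alpha kb hD hnu1 hnu2 halpha hkb x y z Ha). apply global_to_local; auto.
    + intros [phi [_ H]]. rewrite H; unfold mk3; apply glob_eq1; auto.
  - exists (fun th => (sqrt(1+nu)*kb)^2 * ((acoef nu 1 * cos th)^2 + (bcoef nu 1 alpha * sin th)^2)
        / (2*(1 + ((acoef nu 1 * cos th)^2 + (bcoef nu 1 alpha * sin th)^2)))).
    intro th.
    assert (HP: 0 <= (acoef nu 1 * cos th)^2 + (bcoef nu 1 alpha * sin th)^2)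
      by (pose proof (pow2_ge_0 (acoef nu 1 * cos th)); pose proof (pow2_ge_0 (bcoef nu 1 alpha * sin th)); lra).
    split.
    + eexists. rewrite Ufun_eq. apply Uat. exact HP.
    + intro km. rewrite Ufun_eq. apply Umin. exact HP.
  - intros Ut HUt th.
    assert (Heq: Ut = (fun th => (sqrt(1+nu)*kb)^2 * ((acoef nu 1 * cos th)^2 + (bcoef nu 1 alpha * sin th)^2)
        / (2*(1 + ((acoef nu 1 * cos th)^2 + (bcoef nu 1 alpha * sin th)^2))))).
    { apply functional_extensionality. intro t.
      assert (HP: 0 <= (acoef nu 1 * cos t)^2 + (bcoef nu 1 alpha * sin t)^2)
        by (pose proof (pow2_ge_0 (acoef nu 1 * cos t)); pose proof (pow2_ge_0 (bcoef nu 1 alpha * sin t)); lra).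
      destruct (HUt t) as [[km0 Hk] Hall]. apply Rle_antisym.
      - specialize (Hall (sqrt(1+nu)*kb / (1 + ((acoef nu 1 * cos t)^2 + (bcoef nu 1 alpha * sin t)^2)))).
        rewrite Ufun_eq, Uat in Hall by exact HP. exact Hall.
      - rewrite <- Hk, Ufun_eq. apply Umin. exact HP. }
    rewrite Heq. apply deriv_F.
Qed.
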